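(* Let $n$ and $N$ be positive integers. Let $\mathcal{C}(N)$ be the set of partitions $\pi$ into distinct parts satisfying $\ell(\pi) \ge N > \ell(\pi) - s(\pi)$. Then \[ \sum_{\pi \in \mathcal{D}(n)\cap \mathcal{C}(N)} (-1)^{\#(\pi)-1} = \begin{cases} 1, & \text{if } N \mid n,\\ 0, & \text{if } N \nmid n.\end{cases} \]
   Context: $\mathcal{D}(n)$ denotes the set of all partitions of $n$ into distinct parts. For a partition $\pi$: $s(\pi)$ is its smallest part, $\ell(\pi)$ its largest part, and $\#(\pi)$ its number of parts. *)

(* Defs.v *)
From mathcomp Require Import all_boot all_order all_algebra.
Set Implicit Arguments. Unset Strict Implicit. Unset Printing Implicit Defensive.

(* A partition of n into distinct parts is encoded as its (finite) set of
   parts, a subset of {1,...,n} (viewed inside 'I_n.+1 = {0,...,n}),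
   not containing 0, whose elements sum to n. *)
Definition distinct_partition (n : nat) (A : {set 'I_n.+1}) : bool :=
  (ord0 \notin A) && (\sum_(i in A) (i : nat) == n)%N.

Definition lpart (n : nat) (A : {set 'I_n.+1}) : nat := \max_(i in A) (i : nat).

(* smallest part s(pi) (default value n is irrelevant for nonempty A) *)
Definition spart (n : nat) (A : {set 'I_n.+1}) : nat :=
  \big[minn/n]_(i in A) (i : nat).

Definition nparts (n : nat) (A : {set 'I_n.+1}) : nat := #|A|.

Definition in_C (N n : nat) (A : {set 'I_n.+1}) : bool :=
  (N <= lpart A) && (lpart A - spart A < N).

(* Main.v *)
Require Import Defs.
From mathcomp Require Import all_boot all_order all_algebra zify.
Import GRing.Theory Num.Theory.
Set Implicit Arguments. Unset Strict Implicit.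

Lemma divn_uniq N x q : 0 < N -> q*N <= x < q*N + N -> x %/ N = q.
Proof.
move=> hN /andP[h1 h2]. have ->: x = q*N + (x - q*N) by lia.
rewrite divnMDl // divn_small; lia.
Qed.

Definition rep (N m r : nat) := r + N * ((m + N - r) %/ N).

Lemma rep_mod N m r : 0 < N -> r < N -> rep N m r %% N = r.
Proof. move=> hN hr. by rewrite /rep addnC mulnC modnMDl modn_small. Qed.

Lemma rep_bounds N m r : 0 < N -> r < N -> m < rep N m r <= m + N.
Proof. move=> hN hr. rewrite /rep. have := divn_eq (m+N-r) N. have := ltn_pmod (m+N-r) hN. nia. Qed.

Lemma rep_id N m x : 0 < N -> m < x <= m + N -> rep N m (x %% N) = x.
Proof.
move=> hN hx. rewrite /rep. have e := divn_eq x N. have := ltn_pmod x hN.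
rewrite (@divn_uniq N _ (x %/ N)) //; nia.
Qed.

Lemma rep_inj N m r1 r2 : 0 < N -> r1 < N -> r2 < N -> rep N m r1 = rep N m r2 -> r1 = r2.
Proof. move=> hN h1 h2 e. by rewrite -(@rep_mod N m r1 hN h1) e rep_mod. Qed.

Definition res N (hN : 0 < N) (x : nat) : 'I_N := Ordinal (ltn_pmod x hN).

Section E.
Variables (N : nat) (hN : 0 < N) (R : {set 'I_N}).
Definition E j := \sum_(r in R) (j + N - 1 - r) %/ N.

Lemma E0 : E 0 = 0.
Proof. apply: big1 => r _. rewrite divn_small //. have := ltn_ord r. lia. Qed.

Lemma ES j : E j.+1 = E j + (res hN j \in R).
Proof.
rewrite /E.
have ->: \sum_(r in R) (j.+1 + N - 1 - r) %/ N =
  \sum_(r in R) ((j + N - 1 - r) %/ N + (r == res hN j)).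
  apply: eq_bigr => r _.
  have hr := ltn_ord r.
  have e := divn_eq j N. have := ltn_pmod j hN.
  have -> : (r == res hN j) = (val r == j %% N) by [].
  set q := j %/ N. set s := j %% N. move: e => e hs.
  case: (ltngtP s r) => hsr.
  - rewrite (@divn_uniq N _ q) //; last nia.
    rewrite (@divn_uniq N _ q) //; last nia.
    by rewrite addn0.
  - rewrite (@divn_uniq N _ q.+1) //; last nia.
    rewrite (@divn_uniq N _ q.+1) //; last nia.
    by rewrite addn0.
  - rewrite (@divn_uniq N _ q.+1) //; last nia.
    rewrite (@divn_uniq N _ q) //; last nia.
    by rewrite addn1.
rewrite big_split /=. congr (_ + _).
case: (boolP (res hN j \in R)) => hj.
- rewrite (bigD1 (res hN j)) //= eqxx big1 //= => i /andP[_ /negbTE ->]. by [].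
- apply: big1 => i hi. apply/eqP; rewrite eqb0; apply/negP => /eqP e.
  by move: hj; rewrite -e hi.
Qed.

Lemma EN j : E (j + N) = E j + #|R|.
Proof.
rewrite /E -sum1_card -big_split /=. apply: eq_bigr => r _.
have hr := ltn_ord r.
have ->: j + N + N - 1 - r = (j + N - 1 - r) + 1 * N by lia.
by rewrite addnC divnMDl // addnC.
Qed.

Lemma E_mono i j : i <= j -> E i <= E j.
Proof. move=> h. apply: leq_sum => r _. apply: leq_div2r. lia. Qed.

Lemma EcN c : E (c * N) = c * #|R|.
Proof. elim: c => [|c IH]; first by rewrite mul0n E0. by rewrite mulSn addnC EN IH mulSn addnC. Qed.

Lemma sum_rep m : \sum_(r in R) rep N m r = \sum_(r in R) (r : nat) + N * E m.+1.
Proof.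
rewrite /rep big_split /= -big_distrr /E. congr (_ + N * _).
apply: eq_bigr => r _. congr (_ %/ _). lia.
Qed.


Lemma valid_E m : res hN m \in R -> E m.+1 = (E m).+1.
Proof. by move=> h; rewrite ES h addn1. Qed.

Lemma count_m (n : nat) :
  #|[set m : 'I_n.+1 | (res hN m \in R) && (\sum_(r in R) rep N m r == n)]|
  = [&& R != set0, \sum_(r in R) (r : nat) + N <= n & N %| n - \sum_(r in R) (r : nat)].
Proof.
set s := \sum_(r in R) (r : nat).
have uniq: forall m1 m2 : nat, res hN m1 \in R -> res hN m2 \in R ->
    s + N * E m1.+1 = s + N * E m2.+1 -> m1 = m2.
  move=> m1 m2 h1 h2 e.
  have {}e : E m1.+1 = E m2.+1.
    apply/eqP; rewrite -(eqn_pmul2l hN); apply/eqP. lia.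
  case: (ltngtP m1 m2) => // hm.
  - have := E_mono hm. rewrite (valid_E h2) in e. lia.
  - have := E_mono hm. rewrite (valid_E h1) in e. lia.
case: (boolP [&& R != set0, s + N <= n & N %| n - s]) => hc.
- case/and3P: hc => hR hsn hdv.
  case/dvdnP: hdv => c hc.
  have c1 : 0 < c. have: N <= c * N by lia. rewrite -{1}(mul1n N) leq_pmul2r //.
  have hR1 : 0 < #|R| by rewrite card_gt0.
  have ex : exists j, c <= E j.
    exists (c * N). rewrite EcN. by rewrite -{1}(muln1 c) leq_mul2l hR1 orbT.
  case: (ex_minnP ex) => j hj jmin.
  have j0 : 0 < j. case: j hj {jmin} => //. by rewrite E0; lia.
  have hm : E j.-1 < c.
    rewrite ltnNge; apply/negP => /jmin. lia.
  have hj' : E j = E (j.-1).+1 by rewrite prednK.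
  have hv : res hN j.-1 \in R.
    apply/negPn/negP => hn. rewrite hj' ES (negbTE hn) addn0 in hj. lia.
  have Ej : E j = c. rewrite hj' ES hv in hj *. lia.
  have jn : j <= c * N by apply: jmin; rewrite EcN -{1}(muln1 c) leq_mul2l hR1 orbT.
  have mlt : j.-1 < n.+1 by lia.
  rewrite (_ : [set m : 'I_n.+1 | _] = [set Ordinal mlt]) ?cards1 //.
  have hsum : \sum_(r in R) rep N j.-1 r = n.
    rewrite sum_rep -/s prednK // Ej. lia.
  apply/setP => x; rewrite !inE. apply/idP/idP.
  + case/andP => h1 /eqP h2. apply/eqP; apply: val_inj => /=.
    apply: uniq => //. rewrite -!sum_rep -/s. by rewrite h2 hsum.
  + move/eqP => -> /=. by rewrite hv hsum eqxx.
- rewrite (_ : [set m : 'I_n.+1 | _] = set0) ?cards0 //.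
  apply/setP => x; rewrite !inE. apply/negP => /andP[h1 /eqP h2].
  move: hc; apply/negP; rewrite negbK.
  rewrite sum_rep -/s (valid_E h1) in h2.
  apply/and3P; split.
  + apply/set0Pn; by exists (res hN x).
  + lia.
  + apply/dvdnP; exists (E x).+1. lia.
Qed.

End E.
Section Main.
Variables (n N : nat) (hN : 0 < N).

Definition PP : {set {set 'I_N} * 'I_n.+1} :=
  [set p : {set 'I_N} * 'I_n.+1 | (res hN p.2 \in p.1) && (\sum_(r in p.1) rep N p.2 r == n)].
Definition phi (p : {set 'I_N} * 'I_n.+1) : {set 'I_n.+1} :=
  [set (inord (rep N p.2 r) : 'I_n.+1) | r : 'I_N in p.1].

Lemma rep_top m : rep N m (res hN m) = m + N.
Proof. rewrite /= -(modnDr m N) rep_id //. lia. Qed.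

Lemma PP_bound p : p \in PP -> p.2 + N <= n.
Proof.
rewrite inE => /andP[h /eqP e]. rewrite -[X in _ <= X]e (bigD1 (res hN p.2)) //= rep_top. lia.
Qed.

Lemma rep_le p (r : 'I_N) : p \in PP -> rep N p.2 r <= n.
Proof. move=> hp. have := PP_bound hp. have := rep_bounds p.2 hN (ltn_ord r). lia. Qed.

Lemma phi_inj p : p \in PP -> {in p.1 &, injective (fun r : 'I_N => inord (rep N p.2 r) : 'I_n.+1)}.
Proof.
move=> hp r1 r2 _ _ e. have := congr1 val e. rewrite /= !inordK; try by rewrite ltnS rep_le.
move/(rep_inj hN (ltn_ord r1) (ltn_ord r2)). exact: val_inj.
Qed.

Lemma phi_mem p (x : 'I_n.+1) : p \in PP -> x \in phi p -> p.2 < x <= p.2 + N.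
Proof.
move=> hp /imsetP[r hr ->]. rewrite inordK; last by rewrite ltnS rep_le.
exact: rep_bounds.
Qed.

Lemma phi_top p : p \in PP -> (inord (p.2 + N) : 'I_n.+1) \in phi p.
Proof.
move=> hp. apply/imsetP. exists (res hN p.2); first by move: hp; rewrite inE => /andP[].
by rewrite rep_top.
Qed.

Lemma phi_lpart p : p \in PP -> lpart (phi p) = p.2 + N.
Proof.
move=> hp. apply/eqP; rewrite eqn_leq; apply/andP; split.
- apply/bigmax_leqP => x hx. by case/andP: (phi_mem hp hx).
- have := @leq_bigmax_cond _ _ (fun i : 'I_n.+1 => (i : nat)) _ (phi_top hp).
  by rewrite inordK // ltnS PP_bound.
Qed.

Lemma phi_spart p : p \in PP -> p.2 < spart (phi p).
Proof.
move=> hp. rewrite /spart. apply: (big_ind (fun y => p.2 < y)).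
- have := PP_bound hp. lia.
- move=> a b ha hb. by rewrite leq_min ha hb.
- move=> x hx. by case/andP: (phi_mem hp hx).
Qed.

Lemma phi_sum p : p \in PP -> \sum_(i in phi p) (i : nat) = n.
Proof.
move=> hp. rewrite big_imset /=; last exact: phi_inj.
rewrite (eq_bigr (fun r : 'I_N => rep N p.2 r)); last first.
  move=> r _. by rewrite inordK // ltnS rep_le.
by move: hp; rewrite inE => /andP[_ /eqP].
Qed.

Lemma phi_card p : p \in PP -> nparts (phi p) = #|p.1|.
Proof. move=> hp. rewrite /nparts card_in_imset //. exact: phi_inj. Qed.

Lemma phi_X p : p \in PP -> distinct_partition (phi p) && in_C N (phi p).
Proof.
move=> hp. apply/andP; split.
- rewrite /distinct_partition phi_sum // eqxx andbT. apply/negP => h0.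
  have := phi_mem hp h0. by rewrite /=.
- rewrite /in_C phi_lpart //. have hs := phi_spart hp. apply/andP; split; lia.
Qed.

Lemma phi_res p : p \in PP -> [set res hN x | x : 'I_n.+1 in phi p] = p.1.
Proof.
move=> hp. rewrite -imset_comp. rewrite -[RHS]imset_id. apply: eq_in_imset => r hr /=.
apply: val_inj => /=. rewrite inordK; last by rewrite ltnS rep_le.
by rewrite rep_mod.
Qed.

Lemma phi_injP : {in PP &, injective phi}.
Proof.
move=> [R1 m1] [R2 m2] h1 h2 e.
have eR : R1 = R2 by have := phi_res h1; have := phi_res h2; rewrite e /= => -> ->.
have em : m1 = m2.
  apply: val_inj. have := phi_lpart h1. have := phi_lpart h2. rewrite e /=. lia.
by rewrite eR em.
Qed.

Lemma spart_le (A : {set 'I_n.+1}) (x : 'I_n.+1) : x \in A -> spart A <= x.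
Proof.
move=> hx. have: x \in index_enum 'I_n.+1 by rewrite mem_index_enum.
rewrite /spart. elim: (index_enum _) => //= y s IH.
rewrite inE big_cons => /orP[/eqP<-|/IH h]; first by rewrite hx geq_minl.
case: (y \in A) => //. by rewrite geq_min h orbT.
Qed.

Lemma X_phi (A : {set 'I_n.+1}) : 0 < n -> distinct_partition A -> in_C N A -> A \in phi @: PP.
Proof.
move=> hn /andP[h0 /eqP hsum] /andP[hl hls].
have hA : 0 < #|A|.
  rewrite card_gt0; apply/negP => /eqP eA. move: hsum; rewrite eA big_set0. lia.
case: (eq_bigmax_cond (fun i : 'I_n.+1 => (i:nat)) hA) => a0 ha0 hmax.
have hmax' : lpart A = a0 by [].
set m := lpart A - N.
have ml : m + N = lpart A by rewrite /m; lia.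
have win : forall x : 'I_n.+1, x \in A -> m < x <= m + N.
  move=> x hx. have h1 := spart_le hx.
  have h2 : (x : nat) <= lpart A by exact: (@leq_bigmax_cond _ _ (fun i : 'I_n.+1 => (i : nat)) _ hx).
  rewrite /m. lia.
have mlt : m < n.+1. have := ltn_ord a0. lia.
have repx : forall x : 'I_n.+1, x \in A -> rep N m (res hN x) = x.
  move=> x hx. exact: rep_id (win x hx).
have injA : {in A &, injective (fun x : 'I_n.+1 => res hN x)}.
  move=> x y hx hy /= e. apply: val_inj => /=. rewrite -(repx x hx) -(repx y hy). by rewrite e.
apply/imsetP; exists ([set res hN x | x : 'I_n.+1 in A], Ordinal mlt).
- rewrite inE /=; apply/andP; split.
  + apply/imsetP; exists a0 => //. apply: val_inj => /=. rewrite -hmax' -ml.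
    by rewrite modnDr.
  + rewrite big_imset //=. rewrite (eq_bigr (fun x : 'I_n.+1 => (x : nat))) ?hsum //.
- rewrite /phi /= -imset_comp. rewrite -[LHS]imset_id. apply: eq_in_imset => x hx /=.
  apply: val_inj => /=. rewrite repx // inordK //.
Qed.

End Main.


Section Final.
Variables (n N : nat) (hN : 0 < N).
Definition sR (R : {set 'I_N}) := \sum_(r in R) (r : nat).
Definition hR (R : {set 'I_N}) := (sR R + N <= n) && (N %| n - sR R).
Definition uR (R : {set 'I_N}) : int := ((-1) ^+ #|R| *+ hR R)%R.
Definition z0 : 'I_N := Ordinal hN.
Definition tog (R : {set 'I_N}) := if z0 \in R then R :\ z0 else z0 |: R.

Lemma togK : involutive tog.
Proof.
move=> R. rewrite /tog. case: (boolP (z0 \in R)) => h.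
- rewrite !inE eqxx /=. by rewrite setD1K.
- rewrite setU11. by rewrite setU1K.
Qed.

Lemma s_tog R : sR (tog R) = sR R.
Proof.
rewrite /sR /tog. case: (boolP (z0 \in R)) => h.
- by rewrite [in RHS](big_setD1 z0) //=.
- by rewrite big_setU1 //=.
Qed.

Lemma u_tog R : uR (tog R) = (- uR R)%R.
Proof.
rewrite /uR /hR s_tog /tog. case: (boolP (z0 \in R)) => h.
- rewrite [in RHS](cardsD1 z0 R) h add1n exprS mulN1r mulNrn opprK //.
- rewrite cardsU1 h add1n exprS mulN1r mulNrn //.
Qed.

Lemma sum_u : (\sum_(R : {set 'I_N}) uR R)%R = 0%R.
Proof.
have e : (\sum_(R : {set 'I_N}) uR R = \sum_(R : {set 'I_N}) uR (tog R))%R.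
  exact: (reindex_inj (can_inj togK)).
have e2 : (\sum_(R : {set 'I_N}) uR (tog R) = \sum_(R : {set 'I_N}) - uR R)%R.
  by apply: eq_bigr => R _; exact: u_tog.
move: e. rewrite e2 sumrN. move/eqP. rewrite -addr_eq0 -mulr2n mulrn_eq0 /=. by move/eqP.
Qed.

End Final.

Theorem mainTheorem2 (n N : nat) (hn : (0 < n)%N) (hN : (0 < N)%N) :
  (\sum_(A : {set 'I_n.+1} | distinct_partition A && in_C N A)
      (-1) ^+ (nparts A).-1 : int)%R
  = (if (N %| n)%N then 1 else 0)%R.
Proof.
rewrite (eq_bigl (fun A => A \in [set phi p | p in PP n hN])); last first.
  move=> A. apply/idP/idP.
  - case/andP => h1 h2; exact: X_phi.
  - case/imsetP => p hp ->; exact: phi_X.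
rewrite big_imset /=; last exact: phi_injP.
rewrite (eq_bigr (fun p : {set 'I_N} * 'I_n.+1 => (-1) ^+ (#|p.1|.-1) : int)%R); last by move=> p hp; rewrite phi_card.
have -> : (\sum_(p in PP n hN) (-1) ^+ (#|p.1|.-1) : int)%R =
   (\sum_(R : {set 'I_N}) \sum_(m : 'I_n.+1 | (R, m) \in PP n hN) (-1) ^+ (#|R|.-1) : int)%R.
  rewrite pair_big_dep. by apply: eq_bigl => -[R m].
rewrite (eq_bigr (fun R : {set 'I_N} => ((-1) ^+ (#|R|.-1) *+ ([&& R != set0, sR R + N <= n & N %| n - sR R])%N) : int)%R); last first.
  move=> R _. rewrite -count_m -sumr_const. apply: eq_bigl => m. by rewrite !inE.
rewrite (eq_bigr (fun R : {set 'I_N} => (uR n (@set0 'I_N) *+ (R == set0)%N - uR n R : int)%R)); last first.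
  move=> R _. case: (eqVneq R set0) => [->|hR] /=.
  - by rewrite subrr.
  - rewrite /uR /hR mulr0n sub0r.
    have : (0 < #|R|)%N by rewrite card_gt0.
    case: #|R| => // k _ /=. by rewrite exprS mulN1r mulNrn opprK.
rewrite sumrB sum_u // subr0 (bigD1 set0) //= eqxx big1 ?addr0; last first.
  by move=> R /negbTE ->.
rewrite /uR /hR /sR big_set0 cards0 expr0 add0n subn0.
case: (boolP (N %| n)) => hd; last by rewrite andbF.
by rewrite andbT (dvdn_leq hn hd).
Qed.
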